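(* Let $N\in\mathbb{N}_{\ge2}$ and $\phi,B_x,B_y>0$. For any data pairs $\{(x_i,y_i)\}_{i\in[N]}\subset[-B_x,B_x]\times[-B_y,B_y]$ with $|x_i-x_j|\ge\phi$ for all $i\ne j$, there exists a ReLU FNN function $f^{(mmr)}_{FF}:\mathbb{R}\to\mathbb{R}$ with width $N-1$, depth $2$ and weight bound $\max\{1,B_x,B_y,4B_y/\phi\}$ such that $f^{(mmr)}_{FF}(x_i)=y_i$ for all $i\in[N]$. Furthermore, $|f^{(mmr)}_{FF}(x)|\le\frac{8(N-1)B_xB_y}{\phi}+B_y$ for all $x\in[-B_x,B_x]$.
   Context: ReLU FNN of depth $L$, width $W$: $f_0=x$, $f_l=\sigma_R(W_lf_{l-1}+b_l)$ ($1\le l\le L-1$), $f=W_Lf_{L-1}+b_L$ with hidden layers of width $W$, $\sigma_R(x)=\max\{x,0\}$; the weight bound is the maximum absolute value of all weights and biases. *)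

(* Defs.v *)
From HB Require Import structures.
From mathcomp Require Import all_boot all_order all_algebra.
From mathcomp Require Import reals.
Set Implicit Arguments. Unset Strict Implicit. Unset Printing Implicit Defensive.
Import Order.TTheory GRing.Theory Num.Theory.
Local Open Scope ring_scope.

Definition reluR {R : realDomainType} (t : R) : R := Num.max t 0.
Definition relu_vec {R : realDomainType} {n} (v : 'cV[R]_n) : 'cV[R]_n :=
  map_mx reluR v.

(* A ReLU FNN with input dimension din, output dimension dout, depth L
   (L >= 2, i.e. L-1 hidden layers, each of width W):
   f_1 = relu(W_1 x + b_1), f_l = relu(W_l f_{l-1} + b_l) (2 <= l <= L-1),
   f   = W_L f_{L-1} + b_L.
   The L-2 "middle" layers l = 2..L-1 are indexed by 'I_(L-2). *)
Record relu_fnn (R : realDomainType) (din dout W L : nat) := ReluFnn {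
  W_in  : 'M[R]_(W, din);
  b_in  : 'cV[R]_W;
  W_mid : 'I_(L - 2) -> 'M[R]_(W, W);
  b_mid : 'I_(L - 2) -> 'cV[R]_W;
  W_out : 'M[R]_(dout, W);
  b_out : 'cV[R]_dout
}.

Definition fnn_eval {R : realDomainType} {din dout W L}
  (net : relu_fnn R din dout W L) (x : 'cV[R]_din) : 'cV[R]_dout :=
  let f1 := relu_vec (W_in net *m x + b_in net) in
  let fL1 := foldl (fun h (i : 'I_(L - 2)) =>
                      relu_vec (W_mid net i *m h + b_mid net i))
                   f1 (enum 'I_(L - 2)) in
  W_out net *m fL1 + b_out net.

Definition fnn_fun {R : realDomainType} {W L} (net : relu_fnn R 1 1 W L)
  (x : R) : R := fnn_eval net (x%:M) 0 0.

Definition weight_bounded {R : realDomainType} {din dout W L}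
  (net : relu_fnn R din dout W L) (M : R) : Prop :=
  (forall i j, `|W_in net i j| <= M) /\ (forall i j, `|b_in net i j| <= M) /\
  (forall k i j, `|W_mid net k i j| <= M) /\
  (forall k i j, `|b_mid net k i j| <= M) /\
  (forall i j, `|W_out net i j| <= M) /\ (forall i j, `|b_out net i j| <= M).

(* Main.v *)
Require Import Defs.
From HB Require Import structures.
From mathcomp Require Import all_boot all_order all_algebra.
From mathcomp Require Import reals.
From mathcomp Require Import ring lra zify.
Import Order.TTheory GRing.Theory Num.Theory.
Local Open Scope ring_scope.

Section Interp.
Variable R : realFieldType.
Implicit Types X Y : nat -> R.

Definition slope X Y k := (Y k.+1 - Y k) / (X k.+1 - X k).
Definition coef X Y k := slope X Y k - (if k is k'.+1 then slope X Y k' else 0).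

Lemma coef_tele X Y m : \sum_(k < m.+1) coef X Y k = slope X Y m.
Proof.
elim: m => [|m IH]; first by rewrite big_ord1 /coef subr0.
by rewrite big_ord_recr /= IH /coef addrC subrK.
Qed.

Lemma mono_inc X n : (forall k, (k < n)%N -> X k < X k.+1) ->
  forall i j, (i <= j)%N -> (j <= n)%N -> X i <= X j.
Proof.
move=> inc i j; elim: j => [|j IH]; first by rewrite leqn0 => /eqP ->.
rewrite leq_eqVlt => /orP [/eqP -> //| hij] hj.
apply: le_trans (IH hij (ltnW hj)) _; exact: ltW (inc j hj).
Qed.

Lemma interp_sum X Y n : (forall k, (k < n)%N -> X k < X k.+1) ->
  forall m, (m <= n)%N -> \sum_(k < m) coef X Y k * (X m - X k) = Y m - Y 0.
Proof.
move=> inc; elim=> [|m IH] hm; first by rewrite big_ord0 subrr.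
have E : forall k : 'I_m.+1, coef X Y k * (X m.+1 - X k) =
   coef X Y k * (X m.+1 - X m) + coef X Y k * (X m - X k).
  by move=> k; rewrite -mulrDr addrA subrK.
rewrite (eq_bigr _ (fun k _ => E k)) big_split /= -big_distrl /= coef_tele.
rewrite big_ord_recr /= subrr mulr0 addr0 IH ?(ltnW hm) //.
have hd : X m.+1 - X m != 0 by rewrite subr_eq0 gt_eqF // inc.
by rewrite /slope divfK // addrA subrK.
Qed.

Lemma interp_relu X Y n : (forall k, (k < n)%N -> X k < X k.+1) ->
  forall m, (m <= n)%N ->
  \sum_(k < n) coef X Y k * reluR (X m - X k) + Y 0 = Y m.
Proof.
move=> inc m hm.
have -> : \sum_(k < n) coef X Y k * reluR (X m - X k) =
          \sum_(k < m) coef X Y k * (X m - X k).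
  rewrite (big_ord_widen _ (fun k => coef X Y k * (X m - X k)) hm) [RHS]big_mkcond /=.
  apply: eq_bigr => k _; rewrite /reluR.
  case: ltnP => hk.
    by rewrite max_l // subr_ge0 (mono_inc _ _ inc) // ltnW.
  rewrite max_r ?mulr0 // subr_le0 (mono_inc _ _ inc) //. exact: ltnW.
by rewrite (@interp_sum X Y n inc m hm) subrK.
Qed.
End Interp.
Arguments slope {R}. Arguments coef {R}. Arguments interp_relu {R}.
Lemma fnn_fun2 (R : realDomainType) W (net : relu_fnn R 1 1 W 2) t :
 fnn_fun net t = \sum_(k < W) W_out net 0 k * reluR (W_in net k 0 * t + b_in net k 0) + b_out net 0 0.
Proof.
rewrite /fnn_fun /fnn_eval.
have -> : enum 'I_(2 - 2) = [::] by apply: size0nil; rewrite size_enum_ord.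
rewrite /= !mxE; congr (_ + _); apply: eq_bigr => k _.
by rewrite /relu_vec !mxE big_ord1 !mxE eqxx mulr1n.
Qed.

Lemma slope_bound (R : realFieldType) (X Y : nat -> R) k (phi By : R) :
  0 < phi -> phi <= X k.+1 - X k -> `|Y k| <= By -> `|Y k.+1| <= By ->
  `|slope X Y k| <= 2 * By / phi.
Proof.
move=> hphi hx hy0 hy1.
have hd : 0 < X k.+1 - X k by apply: lt_le_trans hx.
rewrite /slope normrM normfV (gtr0_norm hd) ler_pdivrMr // .
have h1 : `|Y k.+1 - Y k| <= 2 * By.
  by apply: le_trans (ler_normB _ _) _; lra.
have h2 : 2 * By / phi * phi = 2 * By by rewrite divfK // gt_eqF.
have h3 : 0 <= 2 * By / phi.
  have hB : 0 <= By by apply: le_trans (normr_ge0 _) hy0.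
  apply: divr_ge0; lra.
nra.
Qed.
Lemma coef_bound (R : realFieldType) (X Y : nat -> R) n (phi By : R) :
  0 < phi -> (forall k, (k < n)%N -> phi <= X k.+1 - X k) ->
  (forall k, (k <= n)%N -> `|Y k| <= By) ->
  forall k, (k < n)%N -> `|coef X Y k| <= 4 * By / phi.
Proof.
move=> hphi hg hY k hk.
have hB : 0 <= By by apply: le_trans (normr_ge0 _) (hY 0%N isT).
have e : 4 * By / phi = 2 * By / phi + 2 * By / phi by rewrite -mulrDl; congr (_ / _); lra.
rewrite /coef e; apply: le_trans (ler_normB _ _) _.
apply: lerD; first exact: slope_bound (hg k hk) (hY k (ltnW hk)) (hY k.+1 hk).
case: k hk => [|k] hk; first by rewrite normr0; apply: divr_ge0; lra.
apply: slope_bound (hg k (ltnW hk)) (hY k _) (hY k.+1 (ltnW hk)) => //.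
by rewrite ltnW // ltnW.
Qed.

Theorem lemma15 (R : realType) (N : nat) (phi Bx By : R)
  (x y : 'I_N -> R) :
  (2 <= N)%N -> 0 < phi -> 0 < Bx -> 0 < By ->
  (forall i, -Bx <= x i <= Bx) -> (forall i, -By <= y i <= By) ->
  (forall i j, i != j -> phi <= `|x i - x j|) ->
  exists net : relu_fnn R 1 1 (N - 1) 2,
    weight_bounded net (Num.max (Num.max 1 Bx) (Num.max By (4 * By / phi))) /\
    (forall i, fnn_fun net (x i) = y i) /\
    (forall t : R, -Bx <= t <= Bx ->
       `|fnn_fun net t| <= 8 * (N - 1)%:R * Bx * By / phi + By).
Proof.
move=> hN hphi hBx hBy hx hy hd.
pose r := [rel i j : 'I_N | x i <= x j].
pose s := sort r (enum 'I_N).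
pose i0 : 'I_N := Ordinal (ltnW hN).
pose p k := nth i0 s k.
pose X k := x (p k). pose Y k := y (p k).
have hsz : size s = N by rewrite size_sort size_enum_ord.
have hun : uniq s by rewrite sort_uniq enum_uniq.
have hso : sorted r s by apply: sort_sorted => i j; exact: le_total.
have hgap : forall k, (k < N - 1)%N -> phi <= X k.+1 - X k.
  move=> k hk.
  have hk1 : (k.+1 < N)%N by lia.
  have hk0 : (k < N)%N by lia.
  have hle : X k <= X k.+1.
    apply: (sorted_leq_nth _ _ i0 hso) => //.
    - by move=> a b c /= hab hbc; apply: le_trans hab hbc.
    - by move=> a /=.
    - by rewrite inE hsz.
    - by rewrite inE hsz.
  have hne : p k.+1 != p k by rewrite /p nth_uniq ?hsz // eqn_leq ltnn.
  by have := hd _ _ hne; rewrite ger0_norm // subr_ge0.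
have hinc : forall k, (k < N - 1)%N -> X k < X k.+1.
  by move=> k hk; have := hgap k hk; lra.
have hYb : forall k, (k <= N - 1)%N -> `|Y k| <= By.
  by move=> k _; rewrite ler_norml; exact: hy.
have hcb := @coef_bound _ X Y (N - 1) phi By hphi hgap hYb.
pose net := @ReluFnn R 1 1 (N - 1) 2 (\matrix_(i, j) 1) (\col_i (- X i))
   (fun _ => 0) (fun _ => 0) (\row_k coef X Y k) (Y 0%N)%:M.
have hev : forall t, fnn_fun net t = \sum_(k < N - 1) coef X Y k * reluR (t - X k) + Y 0%N.
  move=> t; rewrite fnn_fun2 /= [(Y 0%N)%:M 0 0]mxE eqxx mulr1n; congr (_ + _).
  by apply: eq_bigr => k _; rewrite !mxE mul1r.
exists net; split; [|split].
- set M := Num.max _ _.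
  have h1 : 1 <= M by rewrite !le_max lexx.
  have h2 : Bx <= M by rewrite !le_max lexx !orbT.
  have h4 : 4 * By / phi <= M by rewrite !le_max lexx !orbT.
  have h3 : By <= M by rewrite !le_max lexx !orbT.
  rewrite /weight_bounded /=; split; [|split; [|split; [|split; [|split]]]].
  + by move=> i j; rewrite mxE normr1.
  + move=> i j; rewrite mxE normrN; apply: le_trans h2; rewrite ler_norml; exact: hx.
  + by case=> k hk; move: hk; rewrite subnn ltn0.
  + by case=> k hk; move: hk; rewrite subnn ltn0.
  + by move=> i j; rewrite mxE; apply: le_trans h4; apply: hcb.
  + by move=> i j; rewrite !ord1 mxE eqxx mulr1n; apply: le_trans h3; apply: hYb.
- move=> i; rewrite hev.
  have hin : i \in s by rewrite mem_sort mem_enum.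
  have hm : (index i s < N)%N by move: (index_mem i s); rewrite hin hsz.
  have EX : X (index i s) = x i by rewrite /X /p nth_index.
  have EY : Y (index i s) = y i by rewrite /Y /p nth_index.
  rewrite -EX -EY; apply: (interp_relu X Y (N - 1) hinc); lia.
- move=> t ht; rewrite hev.
  apply: le_trans (ler_normD _ _) _.
  apply: lerD; last exact: hYb.
  apply: le_trans (ler_norm_sum _ _ _) _.
  apply: le_trans (_ : \sum_(k < N - 1) (4 * By / phi * (2 * Bx)) <= _).
    apply: ler_sum => k _; rewrite normrM.
    apply: ler_pM => //; first exact: hcb.
    have h0 : 0 <= reluR (t - X k) by rewrite /reluR le_max lexx orbT.
    rewrite ger0_norm // /reluR ge_max; apply/andP; split; last lra.
    have := hx (p k); rewrite /X; lra.
  rewrite sumr_const card_ord -mulr_natl.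
  rewrite le_eqVlt; apply/orP; left; apply/eqP.
  by ring.
Qed.
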